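(* Let $G=(V,E)$ be a connected graph with $n$ vertices, $\tau$ a set of types with $|\tau|=2$, $f:\tau\to\mathbb{Q}_{\ge1}$ a fitness function, $\alpha\in\tau^+(f)$, and $D\in\mathcal D(G,\tau)$. Then $\pi_\alpha(G,\tau,f,D)\ge 1/n$.
   Context: $\tau^+(f)=\{i\in\tau: f(i)=\max_{j\in\tau}f(j)\}$. For $G=(V,E)$, $N(v)$ is the neighbourhood of $v$. $\Omega$ is the set of functions $V\to\tau$; for $S\in\Omega$, $S|_{v\to w}$ equals $S$ except $w$ gets type $S(v)$. The Moran process $M(G,\tau,f,M_0)$: Markov chain on $\Omega$ from $M_0$; given $M_t$, choose $v$ with probability $f(M_t(v))/\sum_uf(M_t(u))$, then $w\in N(v)$ uniformly, set $M_{t+1}=M_t|_{v\to w}$. $\pi_j(G,\tau,f,M_0)$ is the probability that eventually all vertices have type $j$, and $\pi_j(G,\tau,f,D)=\sum_{M_0}\Pr_D(M_0)\pi_j(G,\tau,f,M_0)$. With $k=|\tau|$, $V[k]$ is the set of $k$-tuples of distinct vertices, $\tau[k]$ the set of $k$-tuples of distinct types, $\Omega(\mathbf u,\boldsymbol\gamma)$ the set of states mapping the $i$-th entry of $\mathbf u$ to the $i$-th entry of $\boldsymbol\gamma$ for all $i$. $\mathcal D(G,\tau)$ is the set of distributions $D$ on $\Omega$ for which there are distributions $D_{\mathbf u,\boldsymbol\gamma}$ on $\Omega(\mathbf u,\boldsymbol\gamma)$ with $\Pr_D(S)=\frac{1}{|V[k]\times\tau[k]|}\sum_{(\mathbf u,\boldsymbol\gamma)\in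 V[k]\times\tau[k]}\Pr_{D_{\mathbf u,\boldsymbol\gamma}}(S)$ for all $S$. *)

(* Defs.v *)
From HB Require Import structures.
From mathcomp Require Import all_boot all_order all_algebra.
From mathcomp Require Import all_classical all_reals all_analysis.
Set Implicit Arguments. Unset Strict Implicit. Unset Printing Implicit Defensive.
Import Order.TTheory GRing.Theory Num.Theory.
Import numFieldNormedType.Exports.
Local Open Scope ring_scope.

Section Moran.
Variables (R : realType) (V T : finType).

Definition simple_graph (e : rel V) := symmetric e /\ irreflexive e.
Definition connected_graph (e : rel V) := forall x y : V, connect e x y.

Definition nbhd (e : rel V) (v : V) : {set V} := [set w | e v w].

Definition max_types (f : T -> rat) : {set T} :=
  [set i | [forall j, f j <= f i]].

Definition state := {ffun V -> T}.

Definition upd (S : state) (v w : V) : state :=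
  [ffun x => if x == w then S v else S x].

Definition fit (f : T -> rat) (i : T) : R := ratr (f i).

Definition total_fit (f : T -> rat) (S : state) : R := \sum_(u : V) fit f (S u).

Definition moran_P (e : rel V) (f : T -> rat) (S S' : state) : R :=
  \sum_(v : V) \sum_(w in nbhd e v)
     (S' == upd S v w)%:R * (fit f (S v) / total_fit f S) * (#|nbhd e v|%:R)^-1.

Definition moran_step (e : rel V) (f : T -> rat) (mu : state -> R) : state -> R :=
  fun S' => \sum_(S : state) mu S * moran_P e f S S'.

Definition moran_dist (e : rel V) (f : T -> rat) (D : state -> R) (t : nat) : state -> R :=
  iter t (moran_step e f) D.

Definition all_type (j : T) : state := [ffun _ => j].

(* pi_j(G,tau,f,D): probability that eventually all vertices have type j.
   Since the all-j state is absorbing, this is the limit of Pr[M_t = all j]. *)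
Definition fixation_prob (e : rel V) (f : T -> rat) (D : state -> R) (j : T) : R :=
  limn (fun t => moran_dist e f D t (all_type j)).

Definition is_distr (D : state -> R) :=
  (forall S, 0 <= D S) /\ \sum_(S : state) D S = 1.

Definition tuples_V (k : nat) : {set {ffun 'I_k -> V}} := [set u : {ffun 'I_k -> V} | injectiveb u].
Definition tuples_T (k : nat) : {set {ffun 'I_k -> T}} := [set g : {ffun 'I_k -> T} | injectiveb g].
Definition Omega_ug (k : nat) (u : {ffun 'I_k -> V}) (g : {ffun 'I_k -> T}) : {set state} :=
  [set S : state | [forall i, S (u i) == g i]].

Definition in_calD (D : state -> R) :=
  is_distr D /\
  exists Dfam : {ffun 'I_#|T| -> V} -> {ffun 'I_#|T| -> T} -> state -> R,
    (forall u g, u \in tuples_V #|T| -> g \in tuples_T #|T| ->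
        is_distr (Dfam u g) /\ (forall S, S \notin Omega_ug u g -> Dfam u g S = 0)) /\
    (forall S, D S = (#|tuples_V #|T| | * #|tuples_T #|T| |)%:R^-1 *
        \sum_(u in tuples_V #|T|) \sum_(g in tuples_T #|T|) Dfam u g S).

End Moran.

(* Main.v *)
Require Import Defs.
From HB Require Import structures.
From mathcomp Require Import all_boot all_order all_algebra.
From mathcomp Require Import all_classical all_reals all_analysis.
From mathcomp Require Import fingroup perm.
Import Order.TTheory GRing.Theory Num.Theory.
Local Open Scope ring_scope.
From mathcomp Require Import ring lra.
Import numFieldNormedType.Exports.
Section Core.
Variables (R : realType) (V T : finType) (e : rel V) (f : T -> rat) (alpha : T).
Hypothesis esym : symmetric e.
Hypothesis f1 : forall i, 1 <= f i.
Hypothesis amax : forall j, f j <= f alpha.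
Hypothesis deg_pos : forall v, (0 < #|nbhd e v|)%N.
Variable v0 : V.

Local Notation st := (state V T).
Local Notation F := (@total_fit R V T f).
Local Notation fitr := (fit R f).
Definition deg v : R := #|nbhd e v|%:R.
Definition rate (S : st) v : R := fitr (S v) / F S * (deg v)^-1.
Definition Ph (h : st -> R) (S : st) : R := \sum_(S' : st) moran_P R e f S S' * h S'.

Lemma fit_ge1 i : 1 <= fitr i.
Proof. by rewrite /fit -(rmorph1 (ratr : rat -> R)) ler_rat. Qed.
Lemma fit_gt0 i : 0 < fitr i.
Proof. exact: lt_le_trans ltr01 (fit_ge1 i). Qed.
Lemma F_gt0 S : 0 < F S.
Proof.
rewrite /total_fit (bigD1 v0) //= ltr_wpDr ?fit_gt0 //.
by apply: sumr_ge0 => i _; apply: ltW; apply: fit_gt0.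
Qed.
Lemma deg_gt0 v : 0 < deg v.
Proof. by rewrite /deg ltr0n. Qed.
Lemma rate_gt0 S v : 0 < rate S v.
Proof.
rewrite /rate; apply: mulr_gt0; first apply: mulr_gt0.
- exact: fit_gt0.
- by rewrite invr_gt0 F_gt0.
- by rewrite invr_gt0 deg_gt0.
Qed.
Lemma rate_ge0 S v : 0 <= rate S v.
Proof. exact/ltW/rate_gt0. Qed.

Lemma Ph_eq h S : Ph h S =
  \sum_v \sum_(w | e v w) rate S v * h (upd S v w).
Proof.
rewrite /Ph /moran_P.
under eq_bigr do rewrite big_distrl /=.
rewrite exchange_big; apply: eq_bigr => v _ /=.
under eq_bigr do rewrite big_distrl /=.
rewrite exchange_big /=.
rewrite (eq_bigl (fun w => e v w)); last by move=> w; rewrite /nbhd inE.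
apply: eq_bigr => w _.
rewrite (bigD1 (upd S v w)) //= eqxx big1 ?addr0.
  by rewrite mul1r /rate.
by move=> S' /negbTE ->; rewrite !mul0r.
Qed.

Lemma row_sum S : \sum_v \sum_(w | e v w) rate S v = 1.
Proof.
have -> : \sum_v \sum_(w | e v w) rate S v = \sum_v fitr (S v) / F S.
  apply: eq_bigr => v _; rewrite sumr_const /rate.
  have -> : #|[pred w | e v w]| = #|nbhd e v| by apply: eq_card => w; rewrite /nbhd inE.
  rewrite -mulr_natr -/(deg v) -mulrA mulVf ?mulr1 //; exact/lt0r_neq0/deg_gt0.
by rewrite -mulr_suml divff // gt_eqF // F_gt0.
Qed.

Lemma Ph_sub h S : Ph h S - h S =
  \sum_v \sum_(w | e v w) rate S v * (h (upd S v w) - h S).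
Proof.
have hS : h S = \sum_v \sum_(w | e v w) rate S v * h S.
  by rewrite -[LHS]mulr1 -(row_sum S) mulr_sumr; apply: eq_bigr => v _;
    rewrite mulr_sumr; apply: eq_bigr => w _; rewrite mulrC.
rewrite [X in _ - X = _]hS Ph_eq -sumrB; apply: eq_bigr => v _; rewrite -sumrB; apply: eq_bigr => w _.
by rewrite mulrBr.
Qed.

Lemma Ph_ge0 h S : (forall S, 0 <= h S) -> 0 <= Ph h S.
Proof.
move=> hp; rewrite Ph_eq; apply: sumr_ge0 => v _; apply: sumr_ge0 => w _.
by rewrite mulr_ge0 ?rate_ge0.
Qed.

Lemma sym_sum (G : V -> V -> R) :
  \sum_v \sum_(w | e v w) G v w = \sum_v \sum_(w | e v w) G w v.
Proof.
rewrite (exchange_big_dep predT) //=; apply: eq_bigr => v _.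
by apply: eq_bigl => w; rewrite esym.
Qed.


Definition Z := \sum_v (deg v)^-1.
Definition wt v := (deg v)^-1 / Z.
Definition phi (S : st) := \sum_v (S v == alpha)%:R * wt v.

Lemma Z_gt0 : 0 < Z.
Proof.
rewrite /Z (bigD1 v0) //= ltr_wpDr ?invr_gt0 ?deg_gt0 //.
by apply: sumr_ge0 => i _; rewrite invr_ge0 ltW ?deg_gt0.
Qed.
Lemma wt_gt0 v : 0 < wt v.
Proof. by rewrite /wt mulr_gt0 ?invr_gt0 ?deg_gt0 ?Z_gt0. Qed.
Lemma sum_wt : \sum_v wt v = 1.
Proof. by rewrite /wt -mulr_suml divff // gt_eqF // Z_gt0. Qed.
Lemma phi_ge0 S : 0 <= phi S.
Proof. by apply: sumr_ge0 => v _; rewrite mulr_ge0 ?ler0n ?ltW ?wt_gt0. Qed.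
Lemma phi_le1 S : phi S <= 1.
Proof.
rewrite -sum_wt; apply: ler_sum => v _.
case: (S v == alpha); rewrite ?mul1r ?mul0r //; exact/ltW/wt_gt0.
Qed.

Lemma phi_upd S v w : phi (upd S v w) - phi S =
  wt w * ((S v == alpha)%:R - (S w == alpha)%:R).
Proof.
rewrite /phi -sumrB (bigD1 w) //= big1 ?addr0.
  by rewrite /upd ffunE eqxx -mulrBl mulrC.
by move=> x xw; rewrite /upd ffunE (negbTE xw) subrr.
Qed.

Lemma drift S : 0 <= Ph phi S - phi S.
Proof.
rewrite Ph_sub //.
under eq_bigr do under eq_bigr do rewrite phi_upd.
set G := fun v w => rate S v * (wt w * ((S v == alpha)%:R - (S w == alpha)%:R)).
rewrite -/(\sum_v \sum_(w | e v w) G v w).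
set X := \sum_v \sum_(w | e v w) G v w.
suff : 0 <= X + X by move=> h; lra.
rewrite {2}/X sym_sum // /X -big_split /=; apply: sumr_ge0 => v _.
rewrite -big_split /=; apply: sumr_ge0 => w _.
have -> : G v w + G w v = ((F S)^-1 * Z^-1 * (deg v)^-1 * (deg w)^-1) *
   ((fitr (S v) - fitr (S w)) * ((S v == alpha)%:R - (S w == alpha)%:R)).
  rewrite /G /rate /wt; ring.
apply: mulr_ge0.
  by rewrite !mulr_ge0 // invr_ge0 ltW // ?F_gt0 ?Z_gt0 ?deg_gt0.
have fa : forall j, fitr j <= fitr alpha by move=> j; rewrite /fit ler_rat.
case: (S v =P alpha) => [->|_]; case: (S w =P alpha) => [->|_] /=;
  rewrite ?subrr ?mulr0 //.
- by rewrite subr0 mulr1 subr_ge0.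
- by rewrite sub0r mulrN1 opprB subr_ge0.
Qed.


Definition Dlt S v w := phi (upd S v w) - phi S.

Lemma second S : \sum_v \sum_(w | e v w) rate S v * (Dlt S v w) ^+ 2 <=
  Ph (fun S => phi S ^+ 2) S - phi S ^+ 2.
Proof.
rewrite Ph_sub.
have -> : \sum_v \sum_(w | e v w) rate S v * (phi (upd S v w) ^+ 2 - phi S ^+ 2) =
  \sum_v \sum_(w | e v w) rate S v * (Dlt S v w) ^+ 2 +
  2 * phi S * \sum_v \sum_(w | e v w) rate S v * (phi (upd S v w) - phi S).
  rewrite mulr_sumr -big_split; apply: eq_bigr => v _.
  rewrite mulr_sumr -big_split; apply: eq_bigr => w _.
  rewrite /Dlt /=; ring.
rewrite lerDl -Ph_sub; apply: mulr_ge0; last exact: drift.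
by rewrite mulr_ge0 ?phi_ge0.
Qed.

Lemma cross (P : pred V) x y : connect e x y -> P x -> ~~ P y ->
  exists v w, [&& e v w, P v & ~~ P w].
Proof.
move/connectP => [p pth ->]; elim: p x pth => [|z p IH] x /= pth Px nPy.
  by rewrite Px in nPy.
move/andP: pth => [exz pth]; case Pz: (P z).
  exact: IH pth Pz nPy.
by exists x, z; rewrite exz Px Pz.
Qed.

Definition mixed (S : st) := [exists v, S v == alpha] && [exists v, S v != alpha].

Hypothesis conn : connected_graph e.

Lemma second_pos S : mixed S -> 0 < Ph (fun S => phi S ^+ 2) S - phi S ^+ 2.
Proof.
move=> /andP [/existsP [x Px] /existsP [y Py]].
have [v [w /and3P [evw Pv Pw]]] := @cross (fun z => S z == alpha) x y (conn x y) Px Py.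
apply: lt_le_trans (second S).
rewrite (bigD1 v) //= (bigD1 w) //= -addrA ltr_pwDl //.
  rewrite mulr_gt0 ?rate_gt0 // /Dlt phi_upd (eqP Pv) eqxx (negbTE Pw) subr0 mulr1.
  by rewrite exprn_gt0 ?wt_gt0.
apply: addr_ge0.
  by apply: sumr_ge0 => i _; rewrite mulr_ge0 ?rate_ge0 ?sqr_ge0.
apply: sumr_ge0 => u _; apply: sumr_ge0 => i _.
by rewrite mulr_ge0 ?rate_ge0 ?sqr_ge0.
Qed.

Lemma second_ge0 S : 0 <= Ph (fun S => phi S ^+ 2) S - phi S ^+ 2.
Proof.
apply: le_trans (second S); apply: sumr_ge0 => u _; apply: sumr_ge0 => i _.
by rewrite mulr_ge0 ?rate_ge0 ?sqr_ge0.
Qed.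

Lemma fin_min (X : finType) (P : pred X) (q : X -> R) :
  (forall x, P x -> 0 < q x) -> exists2 c, 0 < c & forall x, P x -> c <= q x.
Proof.
move=> qp; exists (\big[Num.min/1]_(x | P x) q x).
  by elim/big_ind: _ => // a b ha hb; rewrite lt_min ha hb.
move=> x Px; rewrite (bigD1 x) //= ge_min lexx //.
Qed.

Lemma const_c : exists2 c, 0 < c &
  forall S, c * (mixed S)%:R <= Ph (fun S => phi S ^+ 2) S - phi S ^+ 2.
Proof.
have [c c0 hc] := @fin_min _ _ _ second_pos.
exists c => // S; case M: (mixed S).
  by rewrite mulr1 hc.
by rewrite mulr0 second_ge0.
Qed.

Definition E (h : st -> R) (mu : st -> R) := \sum_S mu S * h S.

Lemma E_step mu h : E h (moran_step e f mu) = E (Ph h) mu.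
Proof.
rewrite /E /moran_step /Ph.
under eq_bigr do rewrite big_distrl /=.
rewrite exchange_big; apply: eq_bigr => S _.
by rewrite mulr_sumr; apply: eq_bigr => S' _; rewrite mulrA.
Qed.

Lemma P_ge0 S S' : 0 <= moran_P R e f S S'.
Proof.
apply: sumr_ge0 => v _; apply: sumr_ge0 => w _.
apply: mulr_ge0; last by rewrite invr_ge0 ler0n.
apply: mulr_ge0; first exact: ler0n.
by apply: divr_ge0; apply: ltW; [apply: fit_gt0 | apply: F_gt0].
Qed.

Lemma dist_ge0 (D : st -> R) : (forall S, 0 <= D S) -> forall t S, 0 <= moran_dist e f D t S.
Proof.
move=> hD; elim=> [|t IH] S //=.
by apply: sumr_ge0 => S' _; rewrite mulr_ge0 ?P_ge0.
Qed.

Lemma distS (D : st -> R) t : moran_dist e f D t.+1 = moran_step e f (moran_dist e f D t).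
Proof. by []. Qed.

Lemma E_le h1 h2 mu : (forall S, 0 <= mu S) -> (forall S, h1 S <= h2 S) ->
  E h1 mu <= E h2 mu.
Proof. by move=> hm hh; apply: ler_sum => S _; rewrite ler_wpM2l. Qed.

Lemma E_lin g h c mu : E (fun S => g S + c * h S) mu = E g mu + c * E h mu.
Proof.
rewrite /E mulr_sumr -big_split; apply: eq_bigr => S _ /=; ring.
Qed.

Lemma Ph1 S : Ph (fun _ => 1) S = 1.
Proof.
rewrite Ph_eq -[RHS](row_sum S); apply: eq_bigr => v _; apply: eq_bigr => w _.
by rewrite /= mulr1.
Qed.

Lemma mass (D : st -> R) t : E (fun _ => 1) (moran_dist e f D t) = E (fun _ => 1) D.
Proof.
elim: t => [|t IH] //; rewrite distS E_step -IH.
by apply: eq_bigr => S _; rewrite Ph1.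
Qed.

Local Notation allA := (all_type V alpha).

Lemma upd_all v w : upd allA v w = allA.
Proof. by apply/ffunP => x; rewrite /upd /all_type !ffunE; case: (x == w). Qed.

Lemma P_abs : moran_P R e f allA allA = 1.
Proof.
have -> : moran_P R e f allA allA = Ph (fun S' => (S' == allA)%:R) allA.
  rewrite /Ph (bigD1 allA) //= eqxx mulr1 big1 ?addr0 //.
  by move=> S /negbTE ->; rewrite mulr0.
rewrite Ph_eq -[RHS](row_sum allA); apply: eq_bigr => v _; apply: eq_bigr => w _.
by rewrite /= upd_all eqxx mulr1.
Qed.

Lemma phi_bound S : phi S <= (S == allA)%:R + (mixed S)%:R.
Proof.
case: (S =P allA) => [_|nA].
  by rewrite ler_wpDr ?ler0n ?phi_le1.
rewrite add0r; case M: (mixed S); first exact: phi_le1.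
rewrite /phi big1 // => v _.
case Sv: (S v == alpha); rewrite ?mul0r //.
exfalso; apply: nA; apply/ffunP => x; rewrite /all_type ffunE.
move: M; rewrite /mixed; case: existsP => [_|]; last by case; exists v.
case: existsP => // /= nex _; apply/eqP; apply/negPn/negP => hx; apply: nex.
by exists x.
Qed.

Section Dist.
Variable D : st -> R.
Hypothesis D0 : forall S, 0 <= D S.
Hypothesis D1 : \sum_S D S = 1.

Local Notation mu t := (moran_dist e f D t).
Definition pA t := mu t allA.
Definition mm t := E (fun S => (mixed S)%:R) (mu t).
Definition E1 t := E phi (mu t).
Definition E2 t := E (fun S => phi S ^+ 2) (mu t).

Lemma mass1 t : E (fun _ => 1) (mu t) = 1.
Proof. by rewrite mass /E -[RHS]D1; apply: eq_bigr => S _; rewrite mulr1. Qed.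

Lemma E1_mono t : E1 0 <= E1 t.
Proof.
elim: t => [|t IH] //; apply: le_trans IH _.
rewrite /E1 distS E_step; apply: E_le; first exact: dist_ge0.
by move=> S; rewrite -subr_ge0 drift.
Qed.

Lemma pA_mono t : pA t <= pA t.+1.
Proof.
rewrite /pA distS /moran_step (bigD1 allA) //= P_abs mulr1 lerDl.
by apply: sumr_ge0 => S _; rewrite mulr_ge0 ?P_ge0 ?dist_ge0.
Qed.

Lemma pA_le1 t : pA t <= 1.
Proof.
rewrite -(mass1 t) /pA /E (bigD1 allA) //= mulr1 lerDl.
by apply: sumr_ge0 => S _; rewrite mulr1 dist_ge0.
Qed.

Lemma E1_le t : E1 t <= pA t + mm t.
Proof.
have -> : pA t = E (fun S => (S == allA)%:R) (mu t).
  rewrite /E (bigD1 allA) //= eqxx mulr1 big1 ?addr0 //.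
  by move=> S /negbTE ->; rewrite mulr0.
rewrite /mm -[X in _ + X]mul1r -E_lin; apply: E_le; first exact: dist_ge0.
by move=> S; rewrite mul1r phi_bound.
Qed.

Lemma E2_le1 t : E2 t <= 1.
Proof.
rewrite -(mass1 t); apply: E_le; first exact: dist_ge0.
move=> S; rewrite expr_le1 ?phi_le1 ?phi_ge0 //.
Qed.

Lemma E2_grow c : (forall S, c * (mixed S)%:R <= Ph (fun S => phi S ^+ 2) S - phi S ^+ 2) ->
  forall t, c * \sum_(s < t) mm s <= E2 t.
Proof.
move=> hc; elim=> [|t IH].
  rewrite big_ord0 mulr0; apply: sumr_ge0 => S _.
  by rewrite mulr_ge0 ?sqr_ge0 ?dist_ge0.
rewrite big_ord_recr /= mulrDr.
apply: (@le_trans _ _ (E2 t + c * mm t)); first by rewrite lerD2r.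
rewrite /E2 /mm -E_lin distS E_step; apply: E_le; first exact: dist_ge0.
by move=> S; rewrite -lerBrDl hc.
Qed.

End Dist.

Lemma core_bound (D : st -> R) : (forall S, 0 <= D S) -> \sum_S D S = 1 ->
  (#|V|%:R)^-1 <= E phi D -> (#|V|%:R)^-1 <= fixation_prob e f D alpha.
Proof.
move=> D0 D1 hE.
have [c c0 hc] := const_c.
have hsum t : c * \sum_(s < t) mm D s <= 1.
  exact: le_trans (@E2_grow D D0 c hc t) (@E2_le1 D D0 D1 t).
have hmono : nondecreasing_seq (pA D).
  by apply/nondecreasing_seqP => t; apply: pA_mono.
have hub : has_ubound (range (pA D)).
  by exists 1 => _ [t _ <-]; apply: pA_le1.
have hcv : cvgn (pA D) by apply: nondecreasing_is_cvgn.
have hL t : pA D t <= limn (pA D) by apply: nondecreasing_cvgn_le.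
rewrite /fixation_prob -/(pA D).
rewrite leNgt; apply/negP => HL.
pose eps := (#|V|%:R)^-1 - limn (pA D).
have eps0 : 0 < eps by rewrite subr_gt0.
have hm t : eps <= mm D t.
  have h1 := @E1_le D D0 t.
  have h2 : E phi D <= E1 D t := @E1_mono D D0 t.
  have h3 := hL t.
  rewrite /eps; lra.
have hlow t : c * (eps *+ t) <= 1.
  apply: le_trans (hsum t); rewrite ler_pM2l //.
  have -> : eps *+ t = \sum_(s < t) eps by rewrite sumr_const card_ord.
  apply: ler_sum => s _; exact: hm.
have x0 : 0 <= (c * eps)^-1 by rewrite invr_ge0 ltW // mulr_gt0.
have := archi_boundP x0; set t := Num.Def.archi_bound _ => ht.
have := hlow t; rewrite -mulr_natr mulrA.
have ce0 : 0 < c * eps by rewrite mulr_gt0.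
rewrite -(ltr_pM2l ce0) mulfV ?gt_eqF // in ht.
by rewrite leNgt ht.
Qed.

Lemma count_eq k (i : 'I_k) (v v' : V) :
  \sum_(u in tuples_V V k) ((u i == v)%:R : R) =
  \sum_(u in tuples_V V k) ((u i == v')%:R : R).
Proof.
pose h := fun u : {ffun 'I_k -> V} => [ffun j => tperm v v' (u j)].
have hK : cancel h h by move=> u; apply/ffunP => j; rewrite !ffunE tpermK.
rewrite (reindex_inj (can_inj hK)) /=; apply: eq_big => u.
  rewrite /tuples_V !inE; apply/injectiveP/injectiveP => hu x y.
    by move=> hxy; apply: hu; rewrite !ffunE hxy.
  by rewrite !ffunE => /perm_inj; apply: hu.
move=> _; rewrite ffunE.
congr ((_ : bool)%:R).
apply/eqP/eqP => [h1|->]; last by rewrite tpermR.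
by rewrite -(tpermK v v' (u i)) h1 tpermL.
Qed.

Lemma count_sum k (i : 'I_k) :
  \sum_(u in tuples_V V k) wt (u i) = #|tuples_V V k|%:R / #|V|%:R.
Proof.
pose cnt v := \sum_(u in tuples_V V k) ((u i == v)%:R : R).
have h1 : \sum_(u in tuples_V V k) wt (u i) = \sum_v wt v * cnt v.
  rewrite /cnt; under [RHS]eq_bigr do rewrite mulr_sumr.
  rewrite exchange_big /=; apply: eq_big => // u _.
  rewrite (bigD1 (u i)) //= eqxx mulr1 big1 ?addr0 // => x /negbTE.
  by rewrite eq_sym => ->; rewrite mulr0.
have h2 : #|tuples_V V k|%:R = #|V|%:R * cnt v0 :> R.
  rewrite -sum1_card natr_sum.
  have -> : \sum_(u in tuples_V V k) (1%N%:R : R) = \sum_v cnt v.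
    rewrite /cnt exchange_big /=; apply: eq_big => // u _.
    rewrite (bigD1 (u i)) //= eqxx big1 ?addr0 // => x /negbTE.
    by rewrite eq_sym => ->.
  rewrite (eq_bigr (fun _ => cnt v0)); last by move=> v _; rewrite /cnt (count_eq k i v v0).
  by rewrite sumr_const mulr_natl.
rewrite h1 h2 mulrC mulKf; last by rewrite pnatr_eq0 -lt0n; apply/card_gt0P; exists v0.
under eq_bigr do rewrite /cnt (count_eq k i _ v0).
by rewrite -mulr_suml sum_wt mul1r.
Qed.

Lemma phi_ge_wt (S : st) x : S x == alpha -> wt x <= phi S.
Proof.
move=> Sx; rewrite /phi (bigD1 x) //= Sx mul1r lerDl.
by apply: sumr_ge0 => v _; rewrite mulr_ge0 ?ler0n ?ltW ?wt_gt0.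
Qed.

Lemma init_bound (D : st -> R) : #|T| = 2%N -> in_calD D -> (#|V|%:R)^-1 <= E phi D.
Proof.
move=> hT [[D0 D1] [Dfam [hF hD]]].
set TV := tuples_V V #|T| in hF hD *; set TT := tuples_T T #|T| in hF hD *.
set K := (#|TV| * #|TT|)%:R : R in hD.
have K0 : K != 0.
  apply/negP => /eqP HK.
  have : \sum_S D S = 0 by apply: big1 => S _; rewrite hD HK invr0 mul0r.
  by rewrite D1 => /eqP; rewrite oner_eq0.
have -> : E phi D = K^-1 * \sum_(g in TT) \sum_(u in TV) \sum_S Dfam u g S * phi S.
  rewrite /E; under eq_bigr do rewrite hD -mulrA; rewrite -mulr_sumr; congr (_ * _).
  under eq_bigr do (rewrite big_distrl /=; under eq_bigr do rewrite big_distrl /=).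
  rewrite exchange_big /=; under eq_bigr do rewrite exchange_big /=.
  by rewrite exchange_big.
have hg : forall g, g \in TT -> #|TV|%:R / #|V|%:R <= \sum_(u in TV) \sum_S Dfam u g S * phi S.
  move=> g gT.
  have gi : injective g by move: gT; rewrite inE => /injectiveP.
  have := inj_card_onto gi (_ : #|T| <= #|'I_#|T| |)%N alpha.
  rewrite card_ord leqnn => /(_ isT) /codomP [i hi].
  rewrite -(count_sum _ i); apply: ler_sum => u uT.
  have [[Dg0 Dg1] Dout] := hF u g uT gT.
  rewrite -[X in X <= _]mul1r -Dg1 mulr_suml; apply: ler_sum => S _.
  case SO: (S \in Omega_ug u g).
    rewrite ler_wpM2l //; apply: phi_ge_wt.
    by move: SO; rewrite inE => /forallP /(_ i) /eqP ->; rewrite hi.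
  by rewrite Dout ?SO // !mul0r.
apply: (@le_trans _ _ (K^-1 * \sum_(g in TT) (#|TV|%:R / #|V|%:R))).
  have /andP [hV hTT] : (#|TV|%:R != 0 :> R) && (#|TT|%:R != 0 :> R).
    by move: K0; rewrite /K natrM mulf_eq0 negb_or.
  have hn : #|V|%:R != 0 :> R.
    by rewrite pnatr_eq0 -lt0n; apply/card_gt0P; exists v0.
  rewrite sumr_const /K natrM -[_ *+ #|TT|]mulr_natl.
  rewrite le_eqVlt; apply/orP; left; apply/eqP; field.
  by rewrite hV hTT hn.
by rewrite ler_wpM2l ?invr_ge0 ?ler0n //; apply: ler_sum.
Qed.
End Core.

Theorem lemma8 (R : realType) (V T : finType) (e : rel V) (f : T -> rat)
  (alpha : T) (D : state V T -> R) :
  simple_graph e -> connected_graph e ->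
  #|T| = 2%N ->
  (forall i : T, 1 <= f i) ->
  alpha \in max_types f ->
  in_calD D ->
  (#|V|%:R)^-1 <= fixation_prob e f D alpha.
Proof.
move=> [esym irr] conn hT f1 amaxin hD.
have amax : forall j, f j <= f alpha by move: amaxin; rewrite inE => /forallP.
case: (hD) => [[D0 D1] [Dfam [hF hDe]]].
have [x [y xy]] : exists x y : V, x != y.
  case: (posnP #|tuples_V V #|T| |) => [none | /card_gt0P [u uT]]; last first.
    have h0 : (0 < #|T|)%N by rewrite hT.
    have h1 : (1 < #|T|)%N by rewrite hT.
    exists (u (Ordinal h0)), (u (Ordinal h1)).
    apply/negP => /eqP; move: uT; rewrite /tuples_V inE => /injectiveP ui /ui.
    by move/(congr1 val).
  have : \sum_S D S = 0.
    apply: big1 => S _; rewrite hDe none mul0n invr0 mul0r //.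
  by rewrite D1 => /eqP; rewrite oner_eq0.
have deg_pos v : (0 < #|nbhd e v|)%N.
  have [z zv] : exists z, z != v.
    by case: (x =P v) => [<-|/eqP]; [exists y; rewrite eq_sym | exists x].
  have := conn v z; move/connectP => [[|a p] pth zl].
    by rewrite zl eqxx in zv.
  by move: pth => /= /andP [eva _]; apply/card_gt0P; exists a; rewrite inE.
have v0 := x.
refine (@core_bound R V T e f alpha esym f1 amax deg_pos v0 conn D D0 D1 _).
exact: (@init_bound R V T e alpha deg_pos v0 D hT hD).
Qed.
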